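(* Let $T=(V,E,\gamma,\mathrm{p})$ be a fault tree. Then the output of Algorithm $\mathtt{SFPA}$ (described in the context) on input $T$ equals the unreliability $U(T)$.
   Context: A fault tree (FT) is a tuple $T=(V,E,\gamma,\mathrm{p})$ where $(V,E)$ is a rooted directed acyclic graph (edges point from a node to its children; the root is denoted $R_T$), $\gamma\colon V\to\{\mathtt{OR},\mathtt{AND},\mathtt{BE}\}$ satisfies $\gamma(v)=\mathtt{BE}$ iff $v$ is a leaf, and $\mathrm{p}\colon \mathrm{BE}(T)\to[0,1]$ with $\mathrm{BE}(T)=\{v\in V\mid \gamma(v)=\mathtt{BE}\}$. Let $\mathrm{ch}(v)$ be the set of children of $v$. For $\vec f\in\{0,1\}^{\mathrm{BE}(T)}$ the structure function is defined recursively by $S_T(v,\vec f)=f_v$ if $\gamma(v)=\mathtt{BE}$, $S_T(v,\vec f)=\bigvee_{w\in\mathrm{ch}(v)}S_T(w,\vec f)$ if $\gamma(v)=\mathtt{OR}$, and $S_T(v,\vec f)=\bigwedge_{w\in\mathrm{ch}(v)}S_T(w,\vec f)$ if $\gamma(v)=\mathtt{AND}$. Let $\vec F$ be a random vector in $\{0,1\}^{\mathrm{BE}(T)}$ with independent coordinates and $\mathbb P(F_v=1)=\mathrm{p}(v)$. The unreliability is $U(T)=\mathbb P(S_T(R_T,\vec F)=1)$. Order and dominators: write $x\preceq y$ iff there is a directed path (possibly of length $0$) from $y$ to $x$, and $x\prec y$ iff $x\preceq y$ and $x\neq y$. A node $w$ dominates $v$ if $v\prec w$ and every directed path from $R_T$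 to $v$ contains $w$. For every $v\neq R_T$ there is a unique dominator $\mathrm{id}(v)$ of $v$ (the immediate dominator) such that $\mathrm{id}(v)\preceq w'$ for every dominator $w'$ of $v$. Squarefree polynomial algebra: for a finite set $X$, $\mathcal A(X)$ is the real algebra of formal sums $\alpha=\sum_{Y\subseteq X}\alpha_Y\prod_{x\in Y}\mathsf F_x$ ($\alpha_Y\in\mathbb R$, $\mathsf F_x$ formal variables), with addition and multiplication as for polynomials subject to $\mathsf F_x^2=\mathsf F_x$, i.e. $(\alpha+\beta)_Y=\alpha_Y+\beta_Y$ and $(\alpha\beta)_Y=\sum_{Y',Y''\subseteq X,\,Y'\cup Y''=Y}\alpha_{Y'}\beta_{Y''}$. If $X\subseteq X'$, elements of $\mathcal A(X)$ are regarded as elements of $\mathcal A(X')$ (coefficients $0$ outside $X$); $\mathcal A(\varnothing)=\mathbb R$. For finite sets $X,Y$, $x\in X\setminus Y$, $\alpha\in\mathcal A(X)$, $\beta\in\mathcal A(Y)$, the substitution $\alpha[\mathsf F_x\mapsto\beta]\in\mathcal A((X\setminus\{x\})\cup Y)$ is $\beta\cdot\sum_{Z\subseteq X,\,x\in Z}\alpha_Z\prod_{x'\in Z\setminus\{x\}}\mathsf F_{x'}+\sum_{Z\subseteq X,\,x\notin Z}\alpha_Z\prod_{x'\in Z}\mathsf F_{x'}$, computed in $\mathcal A((X\setminus\{x\})\cup Y)$. Algorithm $\mathtt{SFPA}(T)$: set $\mathsf{ToDo}\leftarrow V$. While $\mathsf{ToDo}\neq\varnothing$: pick $v\in\mathsf{ToDo}$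 minimal w.r.t. $\preceq$ and remove it from $\mathsf{ToDo}$. If $\gamma(v)=\mathtt{BE}$, set $g_v\leftarrow\mathrm{p}(v)$. Otherwise set $g_v\leftarrow 1-\prod_{w\in\mathrm{ch}(v)}(1-\mathsf F_w)$ if $\gamma(v)=\mathtt{OR}$, and $g_v\leftarrow\prod_{w\in\mathrm{ch}(v)}\mathsf F_w$ if $\gamma(v)=\mathtt{AND}$ (variables indexed by nodes); then set $\mathsf{ToDo}_v\leftarrow\{w\in V\mid \mathrm{id}(w)=v\}$ and, while $\mathsf{ToDo}_v\neq\varnothing$, pick $w\in\mathsf{ToDo}_v$ maximal w.r.t. $\preceq$, remove it from $\mathsf{ToDo}_v$, and set $g_v\leftarrow g_v[\mathsf F_w\mapsto g_w]$. Finally return $g_{R_T}$. *)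

(* Defs.v *)
From HB Require Import structures.
From mathcomp Require Import all_boot all_order all_algebra.
Set Implicit Arguments. Unset Strict Implicit. Unset Printing Implicit Defensive.
Import Order.TTheory GRing.Theory Num.Theory.
Local Open Scope ring_scope.

Inductive gate := OR | AND | BE.

Definition isBE (g : gate) : bool := if g is BE then true else false.

Section FaultTree.
Variables (R : realFieldType) (V : finType).
Variables (E : rel V) (gamma : V -> gate) (p : V -> R) (root : V).

Definition preceq (x y : V) : bool := connect E y x.
Definition prec (x y : V) : bool := preceq x y && (x != y).

Definition is_fault_tree : Prop :=
  [/\ (forall x y, E x y -> ~~ connect E y x),
      (forall v, connect E root v),
      (forall v, isBE (gamma v) = ~~ [exists w, E v w])
    & (forall v, isBE (gamma v) -> 0 <= p v <= 1)].

(* recursion along the DAG; fuel #|V| exceeds the length of every path *)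
Fixpoint Sfuel (n : nat) (v : V) (f : V -> bool) : bool :=
  match n with
  | 0 => f v
  | n'.+1 =>
    match gamma v with
    | BE => f v
    | OR => [exists w, E v w && Sfuel n' w f]
    | AND => [forall w, E v w ==> Sfuel n' w f]
    end
  end.

Definition S_T (v : V) (f : V -> bool) : bool := Sfuel #|V| v f.

Definition BEt := {v : V | isBE (gamma v)}.

(* extension of a vector indexed by BE(T) to all nodes (non-BE values are
   never read by the structure function) *)
Definition extf (f : {ffun BEt -> bool}) (v : V) : bool :=
  match @insub V (fun v => isBE (gamma v)) BEt v with
  | Some u => f u
  | None => false
  end.

Definition unreliability : R :=
  \sum_(f : {ffun BEt -> bool} | S_T root (extf f))
     \prod_(u : BEt) (if f u then p (val u) else 1 - p (val u)).

(* alpha = sum_{Y ⊆ V} alpha_Y prod_{x in Y} F_x ; A(X) ⊆ A(V) for X ⊆ V *)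
Definition sfp := {ffun {set V} -> R}.

Definition cstA (c : R) : sfp := [ffun Y : {set V} => if Y == set0 then c else 0].
Definition varA (x : V) : sfp := [ffun Y : {set V} => if Y == [set x] then 1 else 0].
Definition addA (a b : sfp) : sfp := [ffun Y : {set V} => a Y + b Y].
Definition subA (a b : sfp) : sfp := [ffun Y : {set V} => a Y - b Y].
Definition mulA (a b : sfp) : sfp :=
  [ffun Y : {set V} => \sum_(Y1 : {set V}) \sum_(Y2 : {set V} | Y1 :|: Y2 == Y) a Y1 * b Y2].
Definition prodA (s : seq sfp) : sfp := foldr mulA (cstA 1) s.

Definition substA (a : sfp) (x : V) (b : sfp) : sfp :=
  addA (mulA b [ffun Y : {set V} => \sum_(Z : {set V} | (x \in Z) && (Z :\ x == Y)) a Z])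
       [ffun Y : {set V} => if x \in Y then 0 else a Y].

Definition dominates (w v : V) : Prop :=
  prec v w /\
  (forall s : seq V, path E root s -> last root s = v -> w \in root :: s).

Definition is_idom (w d : V) : Prop :=
  dominates d w /\ (forall d', dominates d' w -> preceq d d').

(* s is an admissible order of processing ToDo_v = {w | id(w) = v}:
   each picked element is maximal w.r.t. ⪯ among those remaining *)
Definition todo_order (v : V) (s : seq V) : Prop :=
  [/\ uniq s,
      (forall w, w \in s <-> is_idom w v)
    & (forall i j, (i < j < size s)%N -> ~~ prec (nth v s i) (nth v s j))].

Definition gate_poly (v : V) : sfp :=
  match gamma v with
  | OR => subA (cstA 1) (prodA [seq subA (cstA 1) (varA w) | w <- enum V & E v w])
  | AND => prodA [seq varA w | w <- enum V & E v w]
  | BE => cstA (p v)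
  end.

(* g_v, given the order [ord v] in which ToDo_v is processed; since the
   outer loop processes v only after all its descendants and g_w is never
   modified after w is processed, g_v only depends on these inner orders *)
Fixpoint gfuel (ord : V -> seq V) (n : nat) (v : V) : sfp :=
  match n with
  | 0 => cstA 0
  | n'.+1 =>
    match gamma v with
    | BE => cstA (p v)
    | _ => foldl (fun acc w => substA acc w (gfuel ord n' w)) (gate_poly v) (ord v)
    end
  end.

Definition SFPA (ord : V -> seq V) : sfp := gfuel ord #|V| root.

End FaultTree.

(* Main.v *)
Require Import Defs.
From mathcomp Require Import all_boot all_order all_algebra.
From mathcomp Require Import ring zify.
From Stdlib Require Import Classical ClassicalEpsilon.
Set Implicit Arguments. Unset Strict Implicit. Unset Printing Implicit Defensive.

Module FTHelpers.

Section Graph.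
Variables (V : finType) (E : rel V) (root : V).
Hypothesis acyc : forall x y, E x y -> ~~ connect E y x.
Hypothesis rooted : forall v, connect E root v.

Lemma conn_antisym x y : connect E x y -> connect E y x -> x = y.
Proof.
case/connectP => [[|z s]] /= => [_ -> //|/andP[Exz Hp] Hl Hyx].
have Hzy : connect E z y by apply/connectP; exists s.
by move: (acyc Exz); rewrite (connect_trans Hzy Hyx).
Qed.

Definition rk x := #|[set z | connect E x z]|.

Lemma rk_pos x : (0 < rk x)%N.
Proof. by apply/card_gt0P; exists x; rewrite inE connect0. Qed.

Lemma rk_le x : (rk x <= #|V|)%N.
Proof. exact: max_card. Qed.

Lemma rk_conn x y : connect E x y -> x != y -> (rk y < rk x)%N.
Proof.
move=> Hxy Hne; apply: proper_card; apply/properP; split.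
  by apply/subsetP => z; rewrite !inE => /(connect_trans Hxy).
exists x; rewrite !inE ?connect0 //.
by apply/negP => Hyx; move: Hne; rewrite (conn_antisym Hxy Hyx) eqxx.
Qed.

Lemma edge_neq x y : E x y -> x != y.
Proof. by move=> Exy; apply/eqP => Exy'; move: (acyc Exy); rewrite Exy' connect0. Qed.

Lemma rk_edge x y : E x y -> (rk y < rk x)%N.
Proof. by move=> Exy; apply: rk_conn (connect1 Exy) (edge_neq Exy). Qed.

Lemma edge_ind (P : V -> Prop) :
  (forall u, (forall c, E u c -> P c) -> P u) -> forall u, P u.
Proof.
move=> H u; suff: forall n u, (rk u <= n)%N -> P u by apply; apply: leqnn.
elim=> [|n IH] w Hw; first by move: (rk_pos w); rewrite ltnNge Hw.
apply: H => c Ec; apply: IH; rewrite -ltnS; exact: leq_trans (rk_edge Ec) Hw.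
Qed.

Lemma up_ind (P : V -> Prop) :
  (forall u, (forall d, (rk u < rk d)%N -> P d) -> P u) -> forall u, P u.
Proof.
move=> H u; suff: forall n u, (#|V| - rk u <= n)%N -> P u by apply; apply: leqnn.
elim=> [|n IH] w Hw; apply: H => d Hd; move: (rk_le d) => Hd'.
  lia.
apply: IH; lia.
Qed.

Lemma path_last_conn x s w : path E x s -> w \in x :: s -> connect E w (last x s).
Proof.
elim: s x w => [|y s IH] x w /=; first by move=> _; rewrite inE => /eqP ->.
case/andP=> Exy Hp; rewrite inE => /orP[/eqP ->|Hw].
  exact: connect_trans (connect1 Exy) (IH y y Hp (mem_head _ _)).
exact: IH.
Qed.

Lemma path_prefix x s w : path E x s -> w \in x :: s ->
  exists s1, [/\ path E x s1, last x s1 = w & {subset x :: s1 <= x :: s}].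
Proof.
elim: s x w => [|y s IH] x w /=.
  by move=> _; rewrite inE => /eqP ->; exists [::]; split.
case/andP=> Exy Hp; rewrite inE => /orP[/eqP ->|Hw].
  by exists [::]; split => // z; rewrite inE => /eqP ->; rewrite mem_head.
have [s1 [Hp1 Hl1 Hs1]] := IH y w Hp Hw.
exists (y :: s1); split => //=; first by rewrite Exy.
move=> z; rewrite inE => /orP[/eqP ->|Hz]; first by rewrite mem_head.
by rewrite inE Hs1 ?orbT.
Qed.

Lemma path_chain x s a b : path E x s -> a \in x :: s -> b \in x :: s ->
  connect E a b \/ connect E b a.
Proof.
elim: s x a b => [|y s IH] x a b /=.
  by move=> _; rewrite !inE => /eqP -> /eqP ->; left.
case/andP=> Exy Hp.
have Hc : path E x (y :: s) by rewrite /= Exy.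
rewrite inE => /orP[/eqP ->|Ha]; rewrite inE => /orP[/eqP ->|Hb].
- by left.
- by left; have H := path_connect Hc; apply: H; rewrite inE Hb orbT.
- by right; have H := path_connect Hc; apply: H; rewrite inE Ha orbT.
- exact: IH Hp Ha Hb.
Qed.

Lemma path_to v : exists s, path E root s /\ last root s = v.
Proof. by case/connectP: (rooted v) => s Hp Hl; exists s. Qed.

Lemma dom_prec w u : dominates E root w u -> connect E w u /\ u != w.
Proof. by case=> /andP[]. Qed.

Lemma dom_trans a b c : dominates E root a b -> dominates E root b c ->
  dominates E root a c.
Proof.
move=> [/andP[Hba Nba] Da] [/andP[Hcb Ncb] Db]; split.
  rewrite /prec /preceq (connect_trans Hba Hcb) /=.
  apply/eqP => Eca; move: Hba Ncb; rewrite -Eca => Hbc.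
  by rewrite (conn_antisym Hcb Hbc) eqxx.
move=> s Hp Hl.
have Hb := Db s Hp Hl.
have [s1 [Hp1 Hl1 Hs1]] := path_prefix Hp Hb.
exact: Hs1 (Da s1 Hp1 Hl1).
Qed.

Lemma dom_chain a b u : dominates E root a u -> dominates E root b u ->
  connect E a b \/ connect E b a.
Proof.
move=> [_ Da] [_ Db]; have [s [Hp Hl]] := path_to u.
exact: path_chain Hp (Da s Hp Hl) (Db s Hp Hl).
Qed.

Lemma dom_dom a b u : dominates E root a u -> dominates E root b u ->
  connect E a b -> a != b -> dominates E root b u -> dominates E root a b.
Proof.
move=> [/andP[Hau Nua] Da] _ Hab Nab [/andP[Hbu Nub] _]; split.
  by rewrite /prec /preceq Hab eq_sym Nab.
move=> s Hp Hl.
case/connectP: Hbu => s2 Hp2 Hl2.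
have Hp' : path E root (s ++ s2) by rewrite cat_path Hp Hl Hp2.
have Hl' : last root (s ++ s2) = u by rewrite last_cat Hl.
have := Da _ Hp' Hl'; rewrite -cat_cons mem_cat => /orP[//|Ha2].
have Hba : connect E b a.
  by have H := path_connect Hp2; apply: H; rewrite inE Ha2 orbT.
by move: Nab; rewrite (conn_antisym Hab Hba) eqxx.
Qed.

Lemma root_dom u : u != root -> dominates E root root u.
Proof.
move=> Hu; split; first by rewrite /prec /preceq rooted Hu.
by move=> s _ _; rewrite mem_head.
Qed.

Lemma idom_ex u : u != root -> exists d, is_idom E root u d.
Proof.
move=> Hu.
suff: forall n, (exists d, dominates E root d u /\ (rk d <= n)%N) ->
  exists d, dominates E root d u /\ forall d', dominates E root d' u -> (rk d <= rk d')%N.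
  move/(_ #|V|); case; first by exists root; split; [exact: root_dom|exact: rk_le].
  move=> d [Dd Hmin]; exists d; split => // d' Dd'.
  case: (dom_chain Dd Dd') => H; last by [].
  case: (eqVneq d d') => [->|Ne]; first exact: connect0.
  by move: (Hmin d' Dd'); rewrite leqNgt (rk_conn H Ne).
elim=> [|n IH] [d [Dd Hd]].
  by move: (rk_pos d); rewrite ltnNge Hd.
case: (classic (exists d', dominates E root d' u /\ (rk d' < rk d)%N)).
  move=> [d' [Dd' Hd']]; apply: IH; exists d'; split => //.
  by rewrite -ltnS (leq_trans Hd' Hd).
move=> Hno; exists d; split => // d' Dd'; rewrite leqNgt; apply/negP => Hlt.
by apply: Hno; exists d'.
Qed.

End Graph.

Import Order.TTheory GRing.Theory Num.Theory.
Local Open Scope ring_scope.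

Section Alg.
Variables (R : realFieldType) (V : finType).
Implicit Types (a b : sfp R V) (T Y : {set V}).

Definition ev a T : R := \sum_(Y : {set V} | Y \subset T) a Y.

Lemma ev_cst c T : ev (cstA V c) T = c.
Proof.
rewrite /ev (bigD1 set0) ?sub0set //= ffunE eqxx big1 ?addr0 // => Y /andP[_ HY].
by rewrite ffunE (negbTE HY).
Qed.

Lemma ev_var x T : ev (varA R x) T = (x \in T)%:R.
Proof.
rewrite /ev; case: (boolP (x \in T)) => Hx.
  rewrite (bigD1 [set x]) ?sub1set //= ffunE eqxx big1 ?addr0 // => Y /andP[_ HY].
  by rewrite ffunE (negbTE HY).
rewrite big1 // => Y HY; rewrite ffunE; case: eqP => // EY.
by move: HY; rewrite EY sub1set (negbTE Hx).
Qed.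

Lemma ev_add a b T : ev (Defs.addA a b) T = ev a T + ev b T.
Proof. by rewrite /ev -big_split; apply: eq_bigr => Y _; rewrite ffunE. Qed.

Lemma ev_sub a b T : ev (subA a b) T = ev a T - ev b T.
Proof. by rewrite /ev -sumrB; apply: eq_bigr => Y _; rewrite ffunE. Qed.

Lemma ev_mul a b T : ev (Defs.mulA a b) T = ev a T * ev b T.
Proof.
rewrite /ev.
under eq_bigr do rewrite ffunE.
rewrite big_distrlr /=.
transitivity (\sum_(Y1 : {set V}) \sum_(Y2 : {set V})
   (if (Y1 :|: Y2) \subset T then a Y1 * b Y2 else 0)).
  rewrite big_mkcond /=.
  transitivity (\sum_(Y : {set V}) \sum_(Y1 : {set V}) \sum_(Y2 : {set V})
      (if (Y \subset T) && (Y1 :|: Y2 == Y) then a Y1 * b Y2 else 0)).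
    apply: eq_bigr => Y _; case: (Y \subset T).
      by apply: eq_bigr => Y1 _; rewrite big_mkcond.
    by rewrite big1 // => Y1 _; rewrite big1.
  rewrite exchange_big; apply: eq_bigr => Y1 _.
  rewrite exchange_big; apply: eq_bigr => Y2 _.
  rewrite (bigD1 (Y1 :|: Y2)) //= eqxx andbT big1 ?addr0 // => Y /negbTE HY.
  by rewrite eq_sym HY andbF.
rewrite [RHS]big_mkcond; apply: eq_bigr => Y1 _.
have HU : forall Y2 : {set V}, (Y1 :|: Y2 \subset T) = (Y1 \subset T) && (Y2 \subset T).
  by move=> Y2; exact: subUset.
case HY1: (Y1 \subset T).
  rewrite [RHS]big_mkcond; apply: eq_bigr => Y2 _; by rewrite HU HY1.
by rewrite big1 // => Y2 _; rewrite HU HY1.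
Qed.

Lemma ev_prod s T : ev (prodA s) T = \prod_(x <- s) ev x T.
Proof.
elim: s => [|x s IH]; first by rewrite big_nil /prodA /= ev_cst.
by rewrite big_cons /prodA /= ev_mul -IH.
Qed.

Lemma ev_subst a x b T :
  ev (substA a x b) T = ev b T * ev a (x |: T) + (1 - ev b T) * ev a (T :\ x).
Proof.
rewrite /substA ev_add ev_mul.
have H0 : ev [ffun Y : {set V} => if x \in Y then 0 else a Y] T = ev a (T :\ x).
  rewrite /ev.
  under eq_bigr do rewrite ffunE.
  rewrite [RHS]big_mkcond [LHS]big_mkcond; apply: eq_bigr => Y _.
  rewrite subsetD1; case: (Y \subset T) => //=; case: (x \in Y) => //=.
have H1 : ev a (x |: T) = ev [ffun Y : {set V} => \sum_(Z : {set V} | (x \in Z) && (Z :\ x == Y)) a Z] T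
     + ev [ffun Y : {set V} => if x \in Y then 0 else a Y] T.
  rewrite /ev.
  under [X in _ = X + _]eq_bigr do rewrite ffunE.
  under [X in _ = _ + X]eq_bigr do rewrite ffunE.
  rewrite (bigID (fun Y => x \in Y)) /=; congr (_ + _).
    rewrite [RHS]big_mkcond /=.
    transitivity (\sum_(Y : {set V}) \sum_(Z : {set V})
       (if (Y \subset T) && ((x \in Z) && (Z :\ x == Y)) then a Z else 0)); last first.
      apply: eq_bigr => Y _; case: (Y \subset T) => /=; first by rewrite [RHS]big_mkcond.
      by rewrite big1.
    rewrite exchange_big /= [LHS]big_mkcond; apply: eq_bigr => Z _.
    case: (boolP (x \in Z)) => HxZ /=; last first.
      by rewrite andbF big1 // => Y _; rewrite andbF.
    rewrite andbT (bigD1 (Z :\ x)) //= eqxx andbT big1 ?addr0.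
      by rewrite subDset.
    by move=> Y /negbTE HY; rewrite eq_sym HY andbF.
  rewrite [RHS]big_mkcond [LHS]big_mkcond; apply: eq_bigr => Y _.
  case: (boolP (x \in Y)) => HxY /=; first by rewrite andbF; case: ifP.
  rewrite andbT; congr (if _ then _ else _).
  apply/subsetP/subsetP => H z Hz.
    by have := H z Hz; rewrite in_setU1; case: eqP => // Ez; rewrite Ez (negbTE HxY) in Hz.
  by rewrite in_setU1 H ?orbT.
rewrite H1 H0; ring.
Qed.

Lemma ev_inj a b : (forall T, ev a T = ev b T) -> a = b.
Proof.
move=> H; apply/ffunP => Y.
suff: forall n Y, (#|Y| <= n)%N -> a Y - b Y = 0 by move/(_ _ Y (leqnn _))/eqP; rewrite subr_eq0 => /eqP.
elim=> [|n IH] Z HZ.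
  have E: ev a Z - ev b Z = a Z - b Z.
    move: HZ; rewrite leqn0 cards_eq0 => /eqP ->.
    by rewrite /ev !(big_pred1 set0) // => W; rewrite subset0.
  by rewrite -E H subrr.
have E : ev a Z - ev b Z = \sum_(Y : {set V} | Y \subset Z) (a Y - b Y) by rewrite sumrB.
rewrite H subrr (bigD1 Z) //= [X in _ + X]big1 ?addr0 in E; first by rewrite E.
move=> W /andP[HYZ HY]; apply: IH.
have : W \proper Z by rewrite properEneq HY HYZ.
by move/proper_card => H'; rewrite -ltnS (leq_trans H' HZ).
Qed.

End Alg.

Definition ovr (V : finType) (w : V) (b : bool) (T : {set V}) : {set V} :=
  if b then w |: T else T :\ w.

Section SetFacts.
Variable V : finType.
Implicit Types (T : {set V}) (u w x : V).

Lemma ovrU u w b T : u != w -> ovr w b (u |: T) = u |: ovr w b T.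
Proof.
move=> Hu; apply/setP => z; rewrite /ovr; case: b; rewrite !inE;
  case: (eqVneq z w) => [->|]; rewrite ?(negbTE Hu) ?eqxx ?orbT ?orbF //=;
  rewrite eq_sym (negbTE Hu) //.
Qed.

Lemma ovrD u w b T : u != w -> ovr w b (T :\ u) = (ovr w b T) :\ u.
Proof.
move=> Hu; apply/setP => z; rewrite /ovr; case: b; rewrite !inE;
  case: (eqVneq z w) => [->|]; rewrite ?(negbTE Hu) ?eqxx ?orbT ?orbF //=;
  rewrite eq_sym (negbTE Hu) //.
Qed.

Lemma ovrUw w b T : ovr w b (w |: T) = ovr w b T.
Proof.
apply/setP => z; rewrite /ovr; case: b; rewrite !inE;
  case: (eqVneq z w) => //=.
Qed.

Lemma ovrDw w b T : ovr w b (T :\ w) = ovr w b T.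
Proof.
apply/setP => z; rewrite /ovr; case: b; rewrite !inE;
  case: (eqVneq z w) => //=.
Qed.

Lemma setU1_in x T : x \in T -> x |: T = T.
Proof. by move=> Hx; apply/setP => z; rewrite !inE; case: eqP => // ->. Qed.

Lemma setD1_notin x T : x \notin T -> T :\ x = T.
Proof. by move=> Hx; apply/setP => z; rewrite !inE; case: eqP => // ->; rewrite (negbTE Hx). Qed.

Lemma setU1D1 x T : x \in T -> x |: (T :\ x) = T.
Proof. by move=> Hx; apply/setP => z; rewrite !inE; case: eqP => // ->. Qed.

Lemma setD1D1 x T : (T :\ x) :\ x = T :\ x.
Proof. by apply/setP => z; rewrite !inE; case: eqP. Qed.

Lemma setU1U1 x T : x |: (x |: T) = x |: T.
Proof. by apply/setP => z; rewrite !inE; case: eqP. Qed.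

Definition indep (A : Type) (h : {set V} -> A) x :=
  forall T, h (x |: T) = h T /\ h (T :\ x) = h T.

Lemma indepI (A : Type) (h : {set V} -> A) x :
  (forall T, h (x |: T) = h (T :\ x)) -> indep h x.
Proof.
move=> H T; case: (boolP (x \in T)) => Hx.
  rewrite setU1_in //; split => //.
  by have := H (T :\ x); rewrite setU1D1 // setD1D1 => ->.
by rewrite setD1_notin // H setD1_notin.
Qed.

Lemma in_bigcup_seq (I : Type) (F : I -> {set V}) (s : seq I) x :
  (x \in \bigcup_(i <- s) F i) = has (fun i => x \in F i) s.
Proof.
elim: s => [|i s IH]; first by rewrite big_nil inE.
by rewrite big_cons inE IH.
Qed.

End SetFacts.

Section Sem.
Variables (R : realFieldType) (V : finType) (E : rel V) (gamma : V -> gate) (p : V -> R).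
Hypothesis acyc : forall x y, E x y -> ~~ connect E y x.
Implicit Types (K Ks Kw T : {set V}).

Definition gstep (g : gate) (u : V) (F : V -> bool) (T : {set V}) : bool :=
  match g with
  | BE => u \in T
  | OR => [exists c, E u c && F c]
  | AND => [forall c, E u c ==> F c]
  end.

Fixpoint Sk (n : nat) (K : {set V}) (u : V) (T : {set V}) : bool :=
  match n with
  | 0 => u \in T
  | n'.+1 => if u \in K then gstep (gamma u) u (fun c => Sk n' K c T) T else u \in T
  end.

Definition SK K u T := Sk #|V| K u T.

Lemma gstep_eq g u F F' (T T' : {set V}) : (forall c, E u c -> F c = F' c) ->
  (u \in T) = (u \in T') -> gstep g u F T = gstep g u F' T'.
Proof.
move=> H HT; case: g => //=.
  by apply: eq_existsb => c; case: (boolP (E u c)) => //= Hc; rewrite H.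
by apply: eq_forallb => c; case: (boolP (E u c)) => //= Hc; rewrite H.
Qed.

Lemma Sk_stab n K u T : (rk E u <= n)%N -> Sk n K u T = Sk n.+1 K u T.
Proof.
elim: n u => [|n IH] u Hu; first by move: (rk_pos E u); rewrite ltnNge Hu.
rewrite [LHS]/= [RHS]/=; case: (u \in K) => //.
apply: gstep_eq => // c Ec; apply: IH; rewrite -ltnS; exact: leq_trans (rk_edge acyc Ec) Hu.
Qed.

Lemma Sk_big n m K u T : (rk E u <= n)%N -> (n <= m)%N -> Sk n K u T = Sk m K u T.
Proof.
move=> Hu /subnK <-; elim: (m - n)%N => [|k IH]; first by rewrite add0n.
by rewrite IH addSn Sk_stab // (leq_trans Hu) // leq_addl.
Qed.

Lemma SKE K u T : SK K u T =
  if u \in K then gstep (gamma u) u (fun c => SK K c T) T else u \in T.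
Proof.
rewrite /SK; case HV: #|V| => [|n].
  by move: (rk_le E u) (rk_pos E u); rewrite HV; case: (rk E u).
rewrite [LHS]/=; case: (u \in K) => //.
apply: gstep_eq => // c Ec; apply: Sk_big; last by [].
rewrite -ltnS -HV; exact: leq_trans (rk_edge acyc Ec) (rk_le E u).
Qed.

Lemma Sk_setT n u T : Sk n setT u T = Sfuel E gamma n u (fun x => x \in T).
Proof.
elim: n u => [|n IH] u //=; rewrite in_setT.
case: (gamma u) => //=.
  by apply: eq_existsb => c; rewrite IH.
by apply: eq_forallb => c; rewrite IH.
Qed.

Lemma Sfuel_BE n v f g : (rk E v <= n)%N ->
  (forall x, isBE (gamma x) -> f x = g x) -> Sfuel E gamma n v f = Sfuel E gamma n v g.
Proof.
move=> Hv Hfg; elim: n v Hv => [|n IH] v Hv; first by move: (rk_pos E v); rewrite ltnNge Hv.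
have IHc : forall c, E v c -> Sfuel E gamma n c f = Sfuel E gamma n c g.
  move=> c Ec; apply: IH; rewrite -ltnS; exact: leq_trans (rk_edge acyc Ec) Hv.
rewrite /=; case Hg: (gamma v) => //=.
- by apply: eq_existsb => c; case: (boolP (E v c)) => //= Ec; rewrite IHc.
- by apply: eq_forallb => c; case: (boolP (E v c)) => //= Ec; rewrite IHc.
- by apply: Hfg; rewrite Hg.
Qed.

Lemma SK_indep K u x : u != x -> (forall z, z \in K -> ~~ E z x) ->
  indep (fun T => SK K u T) x.
Proof.
move=> Hux HK; apply: indepI => T; move: u Hux.
elim/(edge_ind acyc) => u IH Hux.
rewrite !SKE; case: (boolP (u \in K)) => HuK; last by rewrite !inE (negbTE Hux).
apply: gstep_eq; last by rewrite !inE (negbTE Hux).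
move=> c Ec; apply: IH => //; apply/eqP => Ecx; move: (HK u HuK); by rewrite -Ecx Ec.
Qed.

Lemma SK_ext K K' u T : (forall z, connect E u z -> (z \in K) = (z \in K')) ->
  SK K u T = SK K' u T.
Proof.
move: u; elim/(edge_ind acyc) => u IH HK.
rewrite !SKE -(HK u (connect0 _ _)); case: (u \in K) => //.
apply: gstep_eq => // c Ec; apply: IH => // z Hz; apply: HK.
exact: connect_trans (connect1 Ec) Hz.
Qed.

Lemma SK_split Ks Kw w T :
  w \in Kw ->
  (forall z c, z \in Ks -> E z c -> c \in Kw -> c = w) ->
  (forall z, connect E w z -> z \notin Ks) ->
  forall u, u \notin Kw -> SK (Ks :|: Kw) u T = SK Ks u (ovr w (SK Kw w T) T).
Proof.
move=> Hw Hi Hii; elim/(edge_ind acyc) => u IH Hu.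
have Huw : u != w by apply/eqP => Euw; rewrite Euw Hw in Hu.
have Hov : forall b, (u \in ovr w b T) = (u \in T).
  by case; rewrite /ovr !inE (negbTE Huw).
rewrite [LHS]SKE [SK Ks u _]SKE in_setU (negbTE Hu) orbF Hov.
case: (boolP (u \in Ks)) => HuK //.
apply: gstep_eq => [c Ec|]; last by rewrite Hov.
case: (eqVneq c w) => [->|Hcw].
  cbv beta.
  have -> : SK (Ks :|: Kw) w T = SK Kw w T.
    apply: SK_ext => z Hz; rewrite in_setU (negbTE (Hii z Hz)) //.
  move: (SK Kw w T) => b.
  rewrite SKE (negbTE (Hii w (connect0 _ _))) /ovr.
  by case: b; rewrite !inE eqxx.
apply: IH => //; apply/negP => HcK; move: Hcw; by rewrite (Hi u c HuK Ec HcK) eqxx.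
Qed.

Fixpoint Ex (s : seq V) (h : {set V} -> R) (T : {set V}) : R :=
  match s with
  | [::] => h T
  | u :: s' => p u * Ex s' h (u |: T) + (1 - p u) * Ex s' h (T :\ u)
  end.

Lemma ExExt s h1 h2 T : (forall T, h1 T = h2 T) -> Ex s h1 T = Ex s h2 T.
Proof. by move=> H; elim: s T => [|u s IH] T /=; rewrite ?IH. Qed.

Lemma ExCat s1 s2 h T : Ex (s1 ++ s2) h T = Ex s1 (Ex s2 h) T.
Proof. by elim: s1 T => [|u s IH] T //=; rewrite !IH. Qed.

Lemma ExL s a h1 h2 T : (forall x, x \in s -> indep a x) ->
  Ex s (fun T => a T * h1 T + (1 - a T) * h2 T) T = a T * Ex s h1 T + (1 - a T) * Ex s h2 T.
Proof.
elim: s T => [|u s IH] T Ha //=.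
have Ha' : forall x, x \in s -> indep a x.
  by move=> x Hx; apply: (Ha x); rewrite inE Hx orbT.
rewrite !IH //; have [E1 E2] := Ha u (mem_head _ _) T; rewrite E1 E2; ring.
Qed.

Lemma ExM s b H1 H0 T : (forall x, x \in s -> indep H1 x /\ indep H0 x) ->
  Ex s (fun T => b T * H1 T + (1 - b T) * H0 T) T = Ex s b T * H1 T + (1 - Ex s b T) * H0 T.
Proof.
elim: s T => [|u s IH] T Ha //=.
have Ha' : forall x, x \in s -> indep H1 x /\ indep H0 x.
  by move=> x Hx; apply: (Ha x); rewrite inE Hx orbT.
rewrite (IH _ Ha') (IH _ Ha'); have [I1 I0] := Ha u (mem_head _ _); move: (I1 T) (I0 T).
move=> [-> ->] [-> ->]; ring.
Qed.

Lemma ExO s h w b T : w \notin s -> Ex s h (ovr w b T) = Ex s (fun T => h (ovr w b T)) T.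
Proof.
elim: s T => [|u s IH] T //= Hw.
rewrite inE negb_or eq_sym in Hw; case/andP: Hw => Huw Hw.
by rewrite -ovrU // -ovrD // !IH.
Qed.

Lemma ExI s h x : x \notin s -> indep h x -> indep (Ex s h) x.
Proof.
move=> Hx Hh; apply: indepI => T.
have -> : x |: T = ovr x true T by [].
have -> : T :\ x = ovr x false T by [].
rewrite !ExO //; apply: ExExt => T' /=.
by have [-> ->] := Hh T'.
Qed.

Lemma indep_ext (h1 h2 : {set V} -> R) x : (forall T, h1 T = h2 T) -> indep h1 x -> indep h2 x.
Proof. by move=> H Hi T; rewrite -!H. Qed.

Lemma indep_nat (h : {set V} -> bool) x : indep h x -> indep (fun T => (h T)%:R : R) x.
Proof. by move=> Hi T; have [-> ->] := Hi T. Qed.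

Lemma step (acc gw : sfp R V) Ks Kw Bs Bw v w :
  (forall T, ev acc T = Ex Bs (fun T => (SK Ks v T)%:R) T) ->
  (forall T, ev gw T = Ex Bw (fun T => (SK Kw w T)%:R) T) ->
  (forall x, x \in Bs -> x \in Ks) -> (forall x, x \in Bw -> x \in Kw) ->
  v \notin Kw -> w \in Kw -> (forall z, z \in Kw -> connect E w z) ->
  (forall z, connect E w z -> z \notin Ks) ->
  (forall z c, z \in Ks -> E z c -> c \in Kw -> c = w) ->
  forall T, ev (substA acc w gw) T = Ex (Bs ++ Bw) (fun T => (SK (Ks :|: Kw) v T)%:R) T.
Proof.
move=> Hacc Hgw HBs HBw HvK HwK HKw Hii Hi T.
set H := fun b T => (SK Ks v (ovr w b T))%:R : R.
set bw := fun T => (SK Kw w T)%:R : R.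
rewrite ExCat ev_subst.
have E1 : forall T', Ex Bw (fun T => (SK (Ks :|: Kw) v T)%:R) T' =
     ev gw T' * H true T' + (1 - ev gw T') * H false T'.
  move=> T'; rewrite Hgw.
  rewrite (ExExt _ (h2 := fun T => bw T * H true T + (1 - bw T) * H false T)); last first.
    move=> T0; rewrite (SK_split (w := w)) //; rewrite /H /bw; case: (SK Kw w T0) => /=; ring.
  apply: ExM => x Hx; have HxK := HBw x Hx.
  suff: forall b, indep (H b) x by move=> Hb; split; apply: Hb.
  move=> b; apply: indep_nat; apply: indepI => T0.
  case: (eqVneq x w) => [->|Hxw]; first by rewrite ovrUw ovrDw.
  rewrite ovrU // ovrD //.
  have Hvx : v != x by apply/eqP => Evx; rewrite Evx HxK in HvK.
  have := SK_indep (K := Ks) Hvx _ (ovr w b T0).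
  case=> [z Hz|-> ->] //; apply/negP => Ezx.
  by move: Hxw; rewrite (Hi z x Hz Ezx HxK) eqxx.
rewrite (ExExt _ _ E1) ExL; last first.
  move=> x Hx; have HxK := HBs x Hx.
  apply: (indep_ext (h1 := Ex Bw bw)); first by move=> T0; rewrite Hgw.
  apply: ExI.
    by apply/negP => HxB; move: (Hii x (HKw x (HBw x HxB))); rewrite HxK.
  apply: indep_nat; apply: SK_indep.
    by apply/eqP => Ewx; move: (Hii w (connect0 _ _)); rewrite Ewx HxK.
  move=> z Hz; apply/negP => Ezx.
  by move: (Hii x (connect_trans (HKw z Hz) (connect1 Ezx))); rewrite HxK.
have HwB : w \notin Bs by apply/negP => HwB; move: (Hii w (connect0 _ _)); rewrite HBs.
have Hb : forall b, Ex Bs (H b) T = ev acc (ovr w b T).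
  by move=> b; rewrite Hacc ExO.
by rewrite !Hb.
Qed.

End Sem.

Section Ffun.
Variables (R : realFieldType) (V : finType) (gamma : V -> gate) (p : V -> R).
Implicit Types (T : {set V}).

Definition wt (u : BEt gamma) (b : bool) : R := if b then p (val u) else 1 - p (val u).
Definition extT (f : {ffun BEt gamma -> bool}) T0 : {set V} :=
  [set x | if isBE (gamma x) then extf f x else x \in T0].
Definition agree (s : seq V) (f : {ffun BEt gamma -> bool}) T0 :=
  [forall u, (val u \notin s) ==> (f u == (val u \in T0))].

Lemma extf_val f (u : BEt gamma) : extf f (val u) = f u.
Proof. by rewrite /extf valK. Qed.

Lemma extT_ovr f a b T0 : isBE (gamma a) -> extT f (ovr a b T0) = extT f T0.
Proof.
move=> Ha; apply/setP => x; rewrite !inE.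
case: (boolP (isBE (gamma x))) => // Hx.
have Hxa : x != a by apply/eqP => Exa; rewrite Exa Ha in Hx.
by rewrite /ovr; case: b; rewrite !inE (negbTE Hxa).
Qed.

Lemma ovr_in_ne (a x : V) b T0 : x != a -> (x \in ovr a b T0) = (x \in T0).
Proof. by move=> H; rewrite /ovr; case: b; rewrite !inE (negbTE H). Qed.

Lemma ovr_in_eq (a : V) b T0 : (a \in ovr a b T0) = b.
Proof. by rewrite /ovr; case: b; rewrite !inE eqxx. Qed.

Lemma agree_cons s f a (Ha : isBE (gamma a)) b T0 : a \notin s ->
  agree s f (ovr a b T0) = agree (a :: s) f T0 && (f (exist _ a Ha) == b).
Proof.
move=> Has; apply/forallP/andP.
  move=> H; split.
    apply/forallP => u; apply/implyP; rewrite inE negb_or => /andP[Hua Hus].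
    by move: (H u); rewrite Hus /= ovr_in_ne.
  by move: (H (exist _ a Ha)) => /= /implyP /(_ Has); rewrite ovr_in_eq.
move=> [/forallP H1 /eqP H2] u; apply/implyP => Hus.
case: (eqVneq (val u) a) => Hua.
  have -> : u = exist _ a Ha by apply: val_inj.
  by rewrite H2 ovr_in_eq.
by move: (H1 u); rewrite inE negb_or Hua Hus /= ovr_in_ne.
Qed.

Lemma Ex_ffun s h T0 : uniq s -> (forall x, x \in s -> isBE (gamma x)) ->
  Ex p s h T0 = \sum_(f : {ffun BEt gamma -> bool} | agree s f T0)
     (\prod_(u : BEt gamma | val u \in s) wt u (f u)) * h (extT f T0).
Proof.
elim: s T0 => [|a s IH] T0 Hu HB.
  pose f0 : {ffun BEt gamma -> bool} := [ffun u => val u \in T0].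
  rewrite (big_pred1 f0) /=.
    rewrite big_pred0 // mul1r; congr h; apply/setP => x; rewrite !inE.
    case: (boolP (isBE (gamma x))) => // Hx.
    by rewrite /extf insubT /f0 ffunE.
  move=> f; rewrite /agree /=; apply/forallP/eqP.
    by move=> H; apply/ffunP => u; rewrite ffunE; apply/eqP; by move: (H u).
  by move=> -> u; rewrite ffunE eqxx.
have Ha : isBE (gamma a) by apply: HB; rewrite mem_head.
move: Hu; rewrite cons_uniq => /andP[Has Hu].
have HB' : forall x, x \in s -> isBE (gamma x) by move=> x Hx; apply: HB; rewrite inE Hx orbT.
set ua : BEt gamma := exist _ a Ha.
have Hb : forall b, (if b then p a else 1 - p a) * Ex p s h (ovr a b T0) =
   \sum_(f : {ffun BEt gamma -> bool} | agree (a :: s) f T0 && (f ua == b))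
     (\prod_(u : BEt gamma | val u \in a :: s) wt u (f u)) * h (extT f T0).
  move=> b; rewrite IH // mulr_sumr; apply: eq_big => [f|f].
    exact: agree_cons.
  rewrite (@agree_cons s f a Ha b T0 Has) => /andP[_ /eqP Hf].
  rewrite extT_ovr // mulrA; congr (_ * _).
  rewrite [RHS](bigD1 ua) /=; last by rewrite mem_head.
  rewrite /wt /= Hf; congr (_ * _); apply: eq_bigl => u; rewrite inE.
  case: (eqVneq (val u) a) => Hua /=.
    have -> : u = ua by apply: val_inj.
    by rewrite eqxx; apply/negbTE.
  have -> : (u != ua) by apply/eqP => Eu; rewrite Eu eqxx in Hua.
  by rewrite andbT.
rewrite [LHS]/=.
have -> : a |: T0 = ovr a true T0 by [].
have -> : T0 :\ a = ovr a false T0 by [].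
rewrite /= (Hb true) (Hb false) [X in _ = X](bigID (fun f : {ffun BEt gamma -> bool} => f ua)) /=.
congr (_ + _); apply: eq_bigl => f; by rewrite ?eqb_id ?eqbF_neg.
Qed.

End Ffun.

Definition pb (P : Prop) : bool := if excluded_middle_informative P then true else false.
Lemma pbE (P : Prop) : pb P <-> P.
Proof. by rewrite /pb; case: excluded_middle_informative. Qed.

Section Main.
Variables (R : realFieldType) (V : finType) (E : rel V) (gamma : V -> gate) (p : V -> R) (root : V).
Hypothesis HT : is_fault_tree E gamma p root.
Variable ord : V -> seq V.
Hypothesis Hord : forall v, todo_order E root v (ord v).

Lemma acyc : forall x y, E x y -> ~~ connect E y x.
Proof. by case: HT. Qed.
Lemma rooted v : connect E root v.
Proof. by case: HT. Qed.
Lemma leaf v : isBE (gamma v) = ~~ [exists w, E v w].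
Proof. by case: HT. Qed.

Lemma SKE' K u T : SK E gamma K u T =
  if u \in K then gstep E (gamma u) u (fun c => SK E gamma K c T) T else u \in T.
Proof. exact: SKE acyc K u T. Qed.

Definition Dset w := [set u | pb (dominates E root w u)].
Definition Kw w := w |: Dset w.
Definition Kpre v s := v |: \bigcup_(w' <- s) Kw w'.

Lemma in_Kw w u : u \in Kw w <-> u = w \/ dominates E root w u.
Proof.
rewrite /Kw in_setU1 /Dset inE; split.
  by case/orP => [/eqP ->|/pbE]; [left|right].
by case => [->|/pbE ->]; rewrite ?eqxx ?orbT.
Qed.

Lemma Kw_conn w z : z \in Kw w -> connect E w z.
Proof. by case/in_Kw => [->|[/andP[]]]. Qed.

Lemma ord_idom v w : w \in ord v <-> is_idom E root w v.
Proof. by case: (Hord v) => _ H _; exact: H. Qed.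

Lemma L v s1 w s2 : ord v = s1 ++ w :: s2 -> forall z, connect E w z -> z \notin Kpre v s1.
Proof.
move=> Hs z Hwz; apply/negP.
have [Hu Hm Hn] := Hord v.
have Hw : is_idom E root w v by apply/(Hm w); rewrite Hs mem_cat mem_head orbT.
have [[/andP[Hvw Nwv] _] Hmin] := Hw.
rewrite in_setU1 => /orP[/eqP Ezv|].
  by rewrite Ezv in Hwz; move: Nwv; rewrite (conn_antisym acyc Hwz Hvw) eqxx.
rewrite in_bigcup_seq => /hasP[w' Hw's Hz].
have Hw' : is_idom E root w' v by apply/(Hm w'); rewrite Hs mem_cat Hw's.
have [[/andP[Hvw' Nw'v] _] _] := Hw'.
have Hws1 : w \notin s1.
  have : uniq (s1 ++ w :: s2) by rewrite -Hs.
  by rewrite cat_uniq => /and3P[_ /hasPn Hn' _]; apply: Hn'; rewrite mem_head.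
have Nww' : w' != w by apply/eqP => E'; rewrite -E' Hw's in Hws1.
have Nc : ~~ connect E w w'.
  have Hi : (index w' s1 < size s1)%N by rewrite index_mem.
  have := Hn (index w' s1) (size s1).
  rewrite Hs Hi size_cat /= addnS ltnS leq_addr => /(_ isT).
  rewrite !nth_cat Hi ltnn subnn nth_index //= /prec /preceq Nww' andbT.
  done.
case/in_Kw: Hz => [Ezw'|Dz].
  by rewrite -Ezw' Hwz in Nc.
case: (classic (forall s, path E root s -> last root s = w -> w' \in root :: s)) => Hall.
  have Dw : dominates E root w' w.
    split => //; rewrite /prec /preceq eq_sym Nww' andbT.
    have [s [Hp Hl]] := path_to rooted w.
    by have := path_last_conn Hp (Hall s Hp Hl); rewrite Hl.
  have Hw'v : connect E w' v := Hmin w' Dw.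
  by move: Nw'v; rewrite (conn_antisym acyc Hvw' Hw'v) eqxx.
apply: Hall => s Hp Hl.
case/connectP: Hwz => s2' Hp2 Hl2.
have Hp' : path E root (s ++ s2') by rewrite cat_path Hp Hl Hp2.
have Hl' : last root (s ++ s2') = z by rewrite last_cat Hl.
have := Dz.2 _ Hp' Hl'; rewrite -cat_cons mem_cat => /orP[//|H2].
have : connect E w w' by have H := path_connect Hp2; apply: H; rewrite inE H2 orbT.
by rewrite (negbTE Nc).
Qed.

Lemma Hi_lem v s1 w s2 : ord v = s1 ++ w :: s2 ->
  forall z c, z \in Kpre v s1 -> E z c -> c \in Kw w -> c = w.
Proof.
move=> Hs z c Hz Ezc /in_Kw [//|Dc]; exfalso.
have [s [Hp Hl]] := path_to rooted z.
have Hp' : path E root (rcons s c) by rewrite rcons_path Hp Hl Ezc.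
have := Dc.2 (rcons s c) Hp' (last_rcons _ _ _).
rewrite -rcons_cons mem_rcons inE => /orP[/eqP Ewc|Hw].
  by case: Dc => /andP[_]; rewrite Ewc eqxx.
have := path_last_conn Hp Hw; rewrite Hl => Hwz.
by move: (L Hs Hwz); rewrite Hz.
Qed.

Lemma v_notin v w : is_idom E root w v -> v \notin Kw w.
Proof.
move=> [[/andP[Hvw Nwv] _] _]; apply/negP => /in_Kw [Evw|[/andP[Hwv _] _]].
  by rewrite Evw eqxx in Nwv.
by move: Nwv; rewrite (conn_antisym acyc Hvw Hwv) eqxx.
Qed.

Lemma dom_cover v u : dominates E root v u ->
  exists2 w, w \in ord v & (u = w \/ dominates E root w u).
Proof.
move: u; elim/(@up_ind _ E) => u IH Hvu.
have Hur : u != root.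
  apply/eqP => Eur; case: Hvu => /andP[Hvu' Nuv] _.
  by move: Nuv; rewrite Eur in Hvu' *; rewrite (conn_antisym acyc Hvu' (rooted v)) eqxx.
have [d Hd] := idom_ex acyc rooted Hur.
case: (eqVneq d v) => [Edv|Ndv].
  by exists u; [apply/ord_idom; rewrite -Edv|left].
have Hdv : connect E v d := Hd.2 v Hvu.
have Dvd : dominates E root v d.
  by apply: (dom_dom acyc Hvu Hd.1 Hdv _ Hd.1); rewrite eq_sym.
have Hrk : (rk E u < rk E d)%N.
  by case: Hd => [[/andP[Hdu Nud] _] _]; rewrite (rk_conn acyc Hdu) // eq_sym.
have [w Hw Hdw] := IH d Hrk Dvd.
exists w => //; right; case: Hdw => [<-|Dwd]; first exact: Hd.1.
apply: (dom_trans acyc Dwd); case: Hd => H _; exact: H.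
Qed.

Lemma Kw_eq v : Kw v = Kpre v (ord v).
Proof.
apply/setP => u; rewrite /Kpre in_setU1; apply/idP/idP.
  case/in_Kw => [->|Dvu]; first by rewrite eqxx.
  have [w Hw Hu] := dom_cover Dvu.
  by rewrite in_bigcup_seq orbC; apply/orP; left; apply/hasP; exists w => //; apply/in_Kw.
case/orP => [/eqP ->|]; first by apply/in_Kw; left.
rewrite in_bigcup_seq => /hasP[w Hw /in_Kw Hu].
have [Dvw _] := (ord_idom v w).1 Hw.
apply/in_Kw; right; case: Hu => [->//|Dwu]; apply: (dom_trans acyc Dvw); exact: Dwu.
Qed.

Lemma Kpre_rcons v s w : Kpre v (rcons s w) = Kpre v s :|: Kw w.
Proof. by rewrite /Kpre -cats1 big_cat big_seq1 setUA. Qed.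

Definition InvP (K : {set V}) v (g : sfp R V) := exists B, [/\ uniq B,
  (forall x, (x \in B) = (x \in K) && isBE (gamma x)) &
  forall T, ev g T = Ex p B (fun T => (SK E gamma K v T)%:R) T].

Lemma inv_BE v : isBE (gamma v) -> InvP (Kw v) v (cstA V (p v)).
Proof.
move=> Hv.
have HK : Kw v = [set v].
  apply/setP => u; rewrite inE; apply/idP/eqP => [/in_Kw [//|[/andP[Hvu Nuv] _]]|->]; last by apply/in_Kw; left.
  case/connectP: Hvu => [[|c s]] /=; first by move=> _ Eu; rewrite Eu eqxx in Nuv.
  case/andP=> Evc _ _; move: Hv; rewrite leaf => /existsP; case; by exists c.
exists [:: v]; split => //.
  by move=> x; rewrite HK !inE; case: eqP => // ->.
move=> T; rewrite ev_cst /= HK !SKE' !inE eqxx /=.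
case Hg: (gamma v) Hv => //= _; rewrite !inE eqxx /=; ring.
Qed.

Lemma inv_init v : ~~ isBE (gamma v) -> InvP (Kpre v [::]) v (gate_poly E gamma p v).
Proof.
move=> Hv.
have HK : Kpre v [::] = [set v] by rewrite /Kpre big_nil setU0.
have Hc : forall c T, E v c -> SK E gamma [set v] c T = (c \in T).
  move=> c T Evc; rewrite SKE' inE.
  by have := edge_neq acyc Evc; rewrite eq_sym => /negbTE ->.
exists [::]; split => //.
  by move=> x; rewrite HK !inE; case: eqP => // ->; rewrite (negbTE Hv) andbF.
move=> T; rewrite HK /= SKE' inE eqxx /gate_poly.
set s := [seq w <- enum V | E v w].
have Hs : forall c, (c \in s) = E v c by move=> c; rewrite mem_filter mem_enum andbT.
have Us : uniq s by rewrite filter_uniq // enum_uniq.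
case Hg: (gamma v) Hv => //= _.
- rewrite ev_sub ev_cst ev_prod big_map.
  under eq_bigr do rewrite ev_sub ev_cst ev_var.
  case: (boolP [exists c, E v c && SK E gamma [set v] c T]) => [/existsP[c /andP[Evc Hct]]|Hno].
    rewrite (bigD1_seq c) ?Hs //= -Hc // Hct subrr mul0r subr0 //.
  rewrite big1_seq ?subrr // => c /andP[_ Hcs].
  rewrite Hs in Hcs; move/existsPn: Hno => /(_ c); rewrite Hcs /= Hc //.
  by move/negbTE => ->; rewrite subr0.
- rewrite ev_prod big_map.
  under eq_bigr do rewrite ev_var.
  case: (boolP [forall c, E v c ==> SK E gamma [set v] c T]) => [/forallP Hall|].
    rewrite big1_seq // => c /andP[_ Hcs]; rewrite Hs in Hcs.
    by move: (Hall c); rewrite Hcs Hc //= => ->.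
  case/forallPn => c; rewrite negb_imply => /andP[Evc Hct].
  rewrite (bigD1_seq c) ?Hs //= -Hc // (negbTE Hct) mul0r //.
Qed.

Lemma fold_inv v n : (forall w, w \in ord v -> InvP (Kw w) w (gfuel E gamma p ord n w)) ->
  forall s2 s1 acc, ord v = s1 ++ s2 -> InvP (Kpre v s1) v acc ->
  InvP (Kpre v (ord v)) v
    (foldl (fun acc w => substA acc w (gfuel E gamma p ord n w)) acc s2).
Proof.
move=> Hinv; elim=> [|w s2 IH] s1 acc Hs Hacc /=; first by rewrite Hs cats0.
apply: (IH (rcons s1 w)); first by rewrite cat_rcons.
rewrite Kpre_rcons.
have Hw : w \in ord v by rewrite Hs mem_cat mem_head orbT.
have Hwi := (ord_idom v w).1 Hw.
have [Bw [Uw Mw Ew]] := Hinv w Hw.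
have [Bs [Us Ms Es]] := Hacc.
have HL := L Hs.
exists (Bs ++ Bw); split.
- rewrite cat_uniq Us Uw andbT /=; apply/hasPn => x HxBw.
  rewrite Ms; move: HxBw; rewrite Mw => /andP[HxK _].
  by rewrite (negbTE (HL x (Kw_conn HxK))).
- by move=> x; rewrite mem_cat Ms Mw -andb_orl -in_setU.
- apply: (step acyc) Es Ew _ _ _ _ _ _ _.
  + by move=> x; rewrite Ms => /andP[].
  + by move=> x; rewrite Mw => /andP[].
  + exact: v_notin.
  + by rewrite /Kw setU11.
  + exact: Kw_conn.
  + exact: HL.
  + exact: Hi_lem Hs.
Qed.

Lemma main_inv n : forall v, (rk E v <= n)%N -> InvP (Kw v) v (gfuel E gamma p ord n v).
Proof.
elim: n => [|n IH] v Hv; first by move: (rk_pos E v); rewrite ltnNge Hv.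
have Hinv : forall w, w \in ord v -> InvP (Kw w) w (gfuel E gamma p ord n w).
  move=> w /ord_idom [[/andP[Hvw Nwv] _] _]; apply: IH.
  by rewrite -ltnS; apply: leq_trans Hv; rewrite (rk_conn acyc Hvw) // eq_sym.
have Hg : forall g, gamma v = g -> g <> BE ->
  InvP (Kw v) v (foldl (fun acc w => substA acc w (gfuel E gamma p ord n w))
                   (gate_poly E gamma p v) (ord v)).
  move=> g Hg Hgb; rewrite Kw_eq; apply: (fold_inv Hinv (s2 := ord v) (s1 := [::])) => //.
  by apply: inv_init; rewrite Hg; case: g Hg Hgb.
rewrite /=; case Hgv: (gamma v).
- exact: Hg Hgv (fun H => match H with erefl => I end).
- exact: Hg Hgv (fun H => match H with erefl => I end).
- by apply: inv_BE; rewrite Hgv.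
Qed.

End Main.

End FTHelpers.
Import FTHelpers.
Import Order.TTheory GRing.Theory Num.Theory.

Theorem theorem21 (R : realFieldType) (V : finType) (E : rel V)
  (gamma : V -> gate) (p : V -> R) (root : V)
  (HT : is_fault_tree E gamma p root)
  (ord : V -> seq V)
  (Hord : forall v, todo_order E root v (ord v)) :
  SFPA E gamma p root ord = cstA V (unreliability E gamma p root).
Proof.
have Hac := acyc HT.
have [B [UB MB EB]] := main_inv HT Hord (rk_le E root).
have HK : Kw E root root = setT.
  apply/setP => u; rewrite in_setT; apply/(in_Kw E root root u).
  case: (eqVneq u root) => [->|H]; [left|right] => //.
  exact: (root_dom (rooted HT) H).
have MB' : forall x, (x \in B) = isBE (gamma x) by move=> x; rewrite MB HK in_setT.
apply: ev_inj => T; rewrite ev_cst /SFPA EB HK.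
rewrite (@Ex_ffun R V gamma p B _ T UB); last by move=> x; rewrite MB'.
rewrite /unreliability [RHS]big_mkcond; apply: eq_big => [f|f _].
  apply/forallP => u; apply/implyP; rewrite MB'.
  by case: u => x Hx /=; rewrite Hx.
rewrite (eq_bigl predT); last by move=> u; rewrite MB' (valP u).
rewrite /SK Sk_setT.
have -> : Sfuel E gamma #|V| root (fun x => x \in extT f T) = S_T E gamma root (extf f).
  apply: (Sfuel_BE Hac) => [|x Hx]; first exact: rk_le.
  by rewrite inE Hx.
by case: (S_T E gamma root (extf f)); rewrite ?mulr1 ?mulr0.
Qed.
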